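(* For CCS, let $L_{CCS}$ be the set of all labels of the transition system $C_I$. Then $L_{CCS}$-bisimilarity coincides with ordinary strong bisimilarity of CCS: $\sim^{L_{CCS}}=\sim^{CCS}$.
   Context: CCS processes are built from $\mathbf{0}$, prefixes $a.P$, $\bar a.P$, $\tau.P$, sums, parallel composition $|$ and restriction $(\nu a)$ (extended processes also allow process variables $X$); $\equiv$ is the standard structural congruence, $\rightsquigarrow$ the standard reduction semantics (closed under $\equiv$, restriction and parallel composition, generated by $(a.P+M)|(\bar a.Q+N)\rightsquigarrow P|Q$ and $\tau.P+M\rightsquigarrow P$), and $\sim^{CCS}$ is ordinary strong bisimilarity on the standard CCS LTS with labels $\tau,a,\bar a$. The LTS $C$: (Tau) $P\rightsquigarrow Q$ gives $P\xrightarrow{-}Q$; (Rcv) $P\equiv(\nu A)(a.Q+M|R)$ with $a\notin A$ gives $P\xrightarrow{-|\bar a.X_1}(\nu A)(Q|R|X_1)$; (Snd) $P\equiv(\nu A)(\bar a.Q+M|R)$ with $a\notin A$ gives $P\xrightarrow{-|a.X_1}(\nu A)(Q|R|X_1)$. $C_I$ instantiates the process variable: $P\xrightarrow{C[-]}_{C_I}Q$ iff $P\xrightarrow{C_\epsilon[-]}Q_\epsilon$ in $C$ and a capture-avoiding substitution $\sigma$ of a pure process for $X_1$ has $Q_\epsilon\sigma\equiv Q$ and $C_\epsilon[-]\sigma=C[-]$. For a set $L$ of labels, an $L$-bisimulation is a symmetric relation $\mathcal{R}$ on pure processes such that if $P\,\mathcal{R}\,Q$ and $P\xrightarrow{C[-]}_{C_I}P'$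 then: if $C[-]\in L$, $Q\xrightarrow{C[-]}_{C_I}Q'$ with $P'\,\mathcal{R}\,Q'$; otherwise $C[Q]\rightsquigarrow Q'$ with $P'\,\mathcal{R}\,Q'$. $\sim^L$ is the largest $L$-bisimulation. *)

(* Defs.v *)
(* CCS with guarded sums, names as de Bruijn indices (nat),
   so that alpha-conversion is built in and capture-avoiding substitution
   is realised by shifting under restrictions. *)
From Stdlib Require Import Arith List.

Inductive act : Type :=
| AIn : nat -> act
| AOut : nat -> act
| ATau : act.

Inductive proc : Type :=
| PSum : sum -> proc
| PPar : proc -> proc -> proc
| PRes : proc -> proc            (* binds de Bruijn name 0 *)
| PVar : nat -> proc
with sum : Type :=
| SNil : sum
| SPre : act -> proc -> sum
| SPlus : sum -> sum -> sum.

Definition PNil : proc := PSum SNil.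

Definition upren (f : nat -> nat) (n : nat) : nat :=
  match n with 0 => 0 | S m => S (f m) end.

Definition act_rename (f : nat -> nat) (a : act) : act :=
  match a with AIn x => AIn (f x) | AOut x => AOut (f x) | ATau => ATau end.

Fixpoint prename (f : nat -> nat) (P : proc) : proc :=
  match P with
  | PSum M => PSum (srename f M)
  | PPar P1 P2 => PPar (prename f P1) (prename f P2)
  | PRes P1 => PRes (prename (upren f) P1)
  | PVar n => PVar n
  end
with srename (f : nat -> nat) (M : sum) : sum :=
  match M with
  | SNil => SNil
  | SPre a P1 => SPre (act_rename f a) (prename f P1)
  | SPlus M1 M2 => SPlus (srename f M1) (srename f M2)
  end.

Definition shift (P : proc) : proc := prename S P.

Definition swap01 (n : nat) : nat :=
  match n with 0 => 1 | 1 => 0 | n => n end.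

Fixpoint ppure (P : proc) : Prop :=
  match P with
  | PSum M => spure M
  | PPar P1 P2 => ppure P1 /\ ppure P2
  | PRes P1 => ppure P1
  | PVar _ => False
  end
with spure (M : sum) : Prop :=
  match M with
  | SNil => True
  | SPre _ P1 => ppure P1
  | SPlus M1 M2 => spure M1 /\ spure M2
  end.

(* (nu A) P with |A| = n *)
Definition resn (n : nat) (P : proc) : proc := Nat.iter n PRes P.

Inductive pcong : proc -> proc -> Prop :=
| pc_refl P : pcong P P
| pc_sym P Q : pcong P Q -> pcong Q P
| pc_trans P Q R : pcong P Q -> pcong Q R -> pcong P R
| pc_sum M N : scong M N -> pcong (PSum M) (PSum N)
| pc_par P P' Q Q' : pcong P P' -> pcong Q Q' -> pcong (PPar P Q) (PPar P' Q')
| pc_res P P' : pcong P P' -> pcong (PRes P) (PRes P')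
| pc_par_comm P Q : pcong (PPar P Q) (PPar Q P)
| pc_par_assoc P Q R : pcong (PPar (PPar P Q) R) (PPar P (PPar Q R))
| pc_par_nil P : pcong (PPar P PNil) P
| pc_res_nil : pcong (PRes PNil) PNil
| pc_res_swap P : pcong (PRes (PRes P)) (PRes (PRes (prename swap01 P)))
| pc_extr P Q : pcong (PPar (PRes P) Q) (PRes (PPar P (shift Q)))
with scong : sum -> sum -> Prop :=
| sc_refl M : scong M M
| sc_sym M N : scong M N -> scong N M
| sc_trans M N K : scong M N -> scong N K -> scong M K
| sc_pre a P Q : pcong P Q -> scong (SPre a P) (SPre a Q)
| sc_plus M M' N N' : scong M M' -> scong N N' -> scong (SPlus M N) (SPlus M' N')
| sc_plus_comm M N : scong (SPlus M N) (SPlus N M)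
| sc_plus_assoc M N K : scong (SPlus (SPlus M N) K) (SPlus M (SPlus N K))
| sc_plus_nil M : scong (SPlus M SNil) M.

Inductive red : proc -> proc -> Prop :=
| red_com a P M Q N :
    red (PPar (PSum (SPlus (SPre (AIn a) P) M)) (PSum (SPlus (SPre (AOut a) Q) N)))
        (PPar P Q)
| red_tau P M : red (PSum (SPlus (SPre ATau P) M)) P
| red_res P P' : red P P' -> red (PRes P) (PRes P')
| red_par P P' Q : red P P' -> red (PPar P Q) (PPar P' Q)
| red_cong P P0 Q0 Q : pcong P P0 -> red P0 Q0 -> pcong Q0 Q -> red P Q.

(* labels: contexts  -   and  - | alpha.T  *)
Inductive ctx : Type :=
| CHole : ctx
| CPre : act -> proc -> ctx.

Definition plug (C : ctx) (P : proc) : proc :=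
  match C with
  | CHole => P
  | CPre a T => PPar P (PSum (SPre a T))
  end.

Definition X1 : proc := PVar 1.

Inductive cstep : proc -> ctx -> proc -> Prop :=
| cs_tau P Q : red P Q -> cstep P CHole Q
| cs_rcv P n a Q M R :
    pcong P (resn n (PPar (PSum (SPlus (SPre (AIn (a + n)) Q) M)) R)) ->
    cstep P (CPre (AOut a) X1) (resn n (PPar (PPar Q R) X1))
| cs_snd P n a Q M R :
    pcong P (resn n (PPar (PSum (SPlus (SPre (AOut (a + n)) Q) M)) R)) ->
    cstep P (CPre (AIn a) X1) (resn n (PPar (PPar Q R) X1)).

Fixpoint psubst (T : proc) (P : proc) : proc :=
  match P with
  | PSum M => PSum (ssubst T M)
  | PPar P1 P2 => PPar (psubst T P1) (psubst T P2)
  | PRes P1 => PRes (psubst (shift T) P1)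
  | PVar n => if Nat.eqb n 1 then T else PVar n
  end
with ssubst (T : proc) (M : sum) : sum :=
  match M with
  | SNil => SNil
  | SPre a P1 => SPre a (psubst T P1)
  | SPlus M1 M2 => SPlus (ssubst T M1) (ssubst T M2)
  end.

Definition csubst (T : proc) (C : ctx) : ctx :=
  match C with
  | CHole => CHole
  | CPre a U => CPre a (psubst T U)
  end.

Definition cstepI (P : proc) (C : ctx) (Q : proc) : Prop :=
  ppure P /\
  exists Ce Qe T, cstep P Ce Qe /\ ppure T /\
                  pcong (psubst T Qe) Q /\ csubst T Ce = C.

Definition L_bisimulation (L : ctx -> Prop) (R : proc -> proc -> Prop) : Prop :=
  (forall P Q, R P Q -> ppure P /\ ppure Q) /\
  (forall P Q, R P Q -> R Q P) /\
  (forall P Q C P', R P Q -> cstepI P C P' ->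
     (L C -> exists Q', cstepI Q C Q' /\ R P' Q') /\
     (~ L C -> exists Q', red (plug C Q) Q' /\ R P' Q')).

Definition L_bisim (L : ctx -> Prop) (P Q : proc) : Prop :=
  exists R, L_bisimulation L R /\ R P Q.

Definition L_CCS (C : ctx) : Prop := exists P Q, cstepI P C Q.

Inductive slts : sum -> act -> proc -> Prop :=
| sl_pre a P : slts (SPre a P) a P
| sl_l M N a P : slts M a P -> slts (SPlus M N) a P
| sl_r M N a P : slts N a P -> slts (SPlus M N) a P.

Definition act_unshift (a : act) : option act :=
  match a with
  | ATau => Some ATau
  | AIn 0 | AOut 0 => None
  | AIn (S x) => Some (AIn x)
  | AOut (S x) => Some (AOut x)
  end.

Inductive lts : proc -> act -> proc -> Prop :=
| l_sum M a P : slts M a P -> lts (PSum M) a P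
| l_par1 P P' Q a : lts P a P' -> lts (PPar P Q) a (PPar P' Q)
| l_par2 P Q Q' a : lts Q a Q' -> lts (PPar P Q) a (PPar P Q')
| l_com1 P P' Q Q' x : lts P (AIn x) P' -> lts Q (AOut x) Q' ->
    lts (PPar P Q) ATau (PPar P' Q')
| l_com2 P P' Q Q' x : lts P (AOut x) P' -> lts Q (AIn x) Q' ->
    lts (PPar P Q) ATau (PPar P' Q')
| l_res P P' a b : lts P a P' -> act_unshift a = Some b ->
    lts (PRes P) b (PRes P').

Definition strong_bisimulation (R : proc -> proc -> Prop) : Prop :=
  (forall P Q, R P Q -> R Q P) /\
  (forall P Q a P', R P Q -> lts P a P' -> exists Q', lts Q a Q' /\ R P' Q').

Definition ccs_bisim (P Q : proc) : Prop :=
  exists R, strong_bisimulation R /\ R P Q.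

(* Main.v *)
Require Import Defs.
From Stdlib Require Import Arith List Lia Bool.

Scheme proc_mind := Induction for proc Sort Prop
with sum_mind := Induction for sum Sort Prop.
Combined Scheme proc_sum_mind from proc_mind, sum_mind.
Scheme pcong_mind := Induction for pcong Sort Prop
with scong_mind := Induction for scong Sort Prop.
Combined Scheme cong_mind from pcong_mind, scong_mind.

Lemma rename_ext_all :
  (forall P f g, (forall n, f n = g n) -> prename f P = prename g P) /\
  (forall M f g, (forall n, f n = g n) -> srename f M = srename g M).
Proof.
  apply proc_sum_mind; intros; simpl.
  - f_equal; auto.
  - f_equal; auto.
  - f_equal. apply H. intros [|n]; simpl; auto.
  - auto.
  - auto.
  - f_equal; auto. destruct a; simpl; rewrite ?H0; auto.
  - f_equal; auto.
Qed.

Lemma rename_comp_all :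
  (forall P f g, prename f (prename g P) = prename (fun n => f (g n)) P) /\
  (forall M f g, srename f (srename g M) = srename (fun n => f (g n)) M).
Proof.
  apply proc_sum_mind; intros; simpl.
  - f_equal; auto.
  - f_equal; auto.
  - f_equal. rewrite H. apply rename_ext_all. intros [|n]; simpl; auto.
  - auto.
  - auto.
  - f_equal; auto. destruct a; simpl; auto.
  - f_equal; auto.
Qed.

Lemma rename_id_all :
  (forall P f, (forall n, f n = n) -> prename f P = P) /\
  (forall M f, (forall n, f n = n) -> srename f M = M).
Proof.
  apply proc_sum_mind; intros; simpl.
  - f_equal; auto.
  - f_equal; auto.
  - f_equal. apply H. intros [|n]; simpl; auto.
  - auto.
  - auto.
  - f_equal; auto. destruct a; simpl; rewrite ?H0; auto.
  - f_equal; auto.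
Qed.

Lemma pure_rename_all :
  (forall P f, ppure (prename f P) <-> ppure P) /\
  (forall M f, spure (srename f M) <-> spure M).
Proof.
  apply proc_sum_mind; intros; simpl;
  repeat match goal with H: forall f, _ <-> _ |- _ => rewrite H; clear H end; tauto.
Qed.

Lemma cong_pure_all :
  (forall P Q, pcong P Q -> (ppure P <-> ppure Q)) /\
  (forall M N, scong M N -> (spure M <-> spure N)).
Proof.
  apply cong_mind; intros; simpl in *; unfold shift;
  rewrite ?(proj1 pure_rename_all); tauto.
Qed.
Definition mk (b : bool) (x : nat) : act := if b then AIn x else AOut x.

Lemma unshift_rename f a b :
  act_unshift a = Some b -> act_unshift (act_rename (upren f) a) = Some (act_rename f b).
Proof. destruct a as [[|x]|[|x]|]; simpl; intro H; inversion H; subst; auto. Qed.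

Lemma slts_rename M a P f : slts M a P -> slts (srename f M) (act_rename f a) (prename f P).
Proof. induction 1; simpl; eauto using slts. Qed.

Lemma lts_rename P a P' : lts P a P' -> forall f, lts (prename f P) (act_rename f a) (prename f P').
Proof.
  induction 1; intro f; simpl.
  - constructor. apply slts_rename; auto.
  - apply l_par1; auto.
  - apply l_par2; auto.
  - eapply l_com1; [apply (IHlts1 f) | apply (IHlts2 f)].
  - eapply l_com2; [apply (IHlts1 f) | apply (IHlts2 f)].
  - eapply l_res; [apply IHlts | apply unshift_rename; auto].
Qed.

Lemma slts_unrename f M a P : slts (srename f M) a P ->
  exists a0 P0, slts M a0 P0 /\ a = act_rename f a0 /\ P = prename f P0.
Proof.
  revert a P. induction M; simpl; intros a0 P0 H; inversion H; subst.
  - eauto 6 using slts.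
  - destruct (IHM1 _ _ H4) as (b & Q & ? & ? & ?); eauto 6 using slts.
  - destruct (IHM2 _ _ H4) as (b & Q & ? & ? & ?); eauto 6 using slts.
Qed.

Lemma upren_inj f : (forall x y, f x = f y -> x = y) -> forall x y, upren f x = upren f y -> x = y.
Proof. intros Hf [|x] [|y]; simpl; intro H; inversion H; auto. Qed.

Lemma lts_unrename X a X' : lts X a X' -> forall f P, (forall x y, f x = f y -> x = y) ->
  X = prename f P ->
  exists a0 P', lts P a0 P' /\ a = act_rename f a0 /\ X' = prename f P'.
Proof.
  induction 1; intros f P0 Hf E; destruct P0; simpl in E; try discriminate; inversion E; subst.
  - destruct (slts_unrename _ _ _ _ H) as (b & Q & ? & ? & ?); subst. exists b, Q. split; [constructor; auto| auto].
  - destruct (IHlts f P0_1 Hf eq_refl) as (b & Q & ? & ? & ?); subst.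
    exists b, (PPar Q P0_2); eauto using lts.
  - destruct (IHlts f P0_2 Hf eq_refl) as (b & Q & ? & ? & ?); subst.
    exists b, (PPar P0_1 Q); eauto using lts.
  - destruct (IHlts1 f P0_1 Hf eq_refl) as (b & Q1 & ? & Hb & ?); subst.
    destruct (IHlts2 f P0_2 Hf eq_refl) as (c & Q2 & ? & Hc & ?); subst.
    destruct b; try discriminate; destruct c; try discriminate.
    simpl in Hb, Hc. inversion Hb; inversion Hc. rewrite H4 in H5. apply Hf in H5; subst.
    exists ATau, (PPar Q1 Q2); eauto using lts.
  - destruct (IHlts1 f P0_1 Hf eq_refl) as (b & Q1 & ? & Hb & ?); subst.
    destruct (IHlts2 f P0_2 Hf eq_refl) as (c & Q2 & ? & Hc & ?); subst.
    destruct b; try discriminate; destruct c; try discriminate.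
    simpl in Hb, Hc. inversion Hb; inversion Hc. rewrite H4 in H5. apply Hf in H5; subst.
    exists ATau, (PPar Q1 Q2); eauto using lts.
  - destruct (IHlts (upren f) P0 (upren_inj f Hf) eq_refl) as (b1 & Q & ? & Hb & ?); subst.
    destruct b1 as [[|x]|[|x]|]; simpl in H0; try discriminate; inversion H0; subst.
    + exists (AIn x), (PRes Q); split; [eapply l_res; eauto|]; auto.
    + exists (AOut x), (PRes Q); split; [eapply l_res; eauto|]; auto.
    + exists ATau, (PRes Q); split; [eapply l_res; eauto|]; auto.
Qed.
Definition simL (P Q : proc) := forall a P', lts P a P' -> exists Q', lts Q a Q' /\ pcong P' Q'.
Definition simS (M N : sum) := forall a P, slts M a P -> exists P', slts N a P' /\ pcong P P'.

Lemma no_nil a X : ~ lts PNil a X.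
Proof. intro H; inversion H; subst. inversion H1. Qed.

Ltac inv H := inversion H; subst; clear H.

Lemma sim_refl P : simL P P.
Proof. intros a P' H; exists P'; split; eauto using pcong. Qed.

Lemma sim_trans P Q R : simL P Q -> simL Q R -> simL P R.
Proof.
  intros H1 H2 a P' H. destruct (H1 _ _ H) as (Q' & HQ & E1).
  destruct (H2 _ _ HQ) as (R' & HR & E2). exists R'; split; eauto using pcong.
Qed.

Lemma simS_refl M : simS M M.
Proof. intros a P' H; exists P'; split; eauto using pcong. Qed.

Lemma simS_trans P Q R : simS P Q -> simS Q R -> simS P R.
Proof.
  intros H1 H2 a P' H. destruct (H1 _ _ H) as (Q' & HQ & E1).
  destruct (H2 _ _ HQ) as (R' & HR & E2). exists R'; split; eauto using pcong.
Qed.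

Lemma sim_sum M N : simS M N -> simL (PSum M) (PSum N).
Proof.
  intros HS a P' H. inv H. destruct (HS _ _ H1) as (Q' & ? & ?). exists Q'; split; eauto using lts.
Qed.

Lemma sim_par P P' Q Q' : pcong P P' -> pcong Q Q' -> simL P P' -> simL Q Q' -> simL (PPar P Q) (PPar P' Q').
Proof.
  intros E1 E2 H1 H2 a X H. inv H;
  repeat match goal with
  | Hl : lts P _ _ |- _ => let Y := fresh "Y" in destruct (H1 _ _ Hl) as (Y & ? & ?); clear Hl
  | Hl : lts Q _ _ |- _ => let Y := fresh "Y" in destruct (H2 _ _ Hl) as (Y & ? & ?); clear Hl
  end; eexists; split; eauto using lts, pcong.
Qed.

Lemma sim_res P P' : simL P P' -> simL (PRes P) (PRes P').
Proof.
  intros H1 a X H. inv H.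
  match goal with Hl : lts P _ _ |- _ => destruct (H1 _ _ Hl) as (Y & ? & ?) end. exists (PRes Y); split; eauto using lts, pcong.
Qed.

Lemma sim_comm P Q : simL (PPar P Q) (PPar Q P).
Proof.
  intros a X H. inv H; eexists; split; eauto using lts, pcong.
Qed.

Lemma sim_assoc1 P Q R : simL (PPar (PPar P Q) R) (PPar P (PPar Q R)).
Proof.
  intros a X H. inv H; repeat match goal with Hl : lts (PPar _ _) _ _ |- _ => inv Hl end;
  eexists; split; eauto 7 using lts, pcong.
Qed.

Lemma sim_assoc2 P Q R : simL (PPar P (PPar Q R)) (PPar (PPar P Q) R).
Proof.
  intros a X H. inv H; repeat match goal with Hl : lts (PPar _ _) _ _ |- _ => inv Hl end;
  eexists; split; eauto 7 using lts, pcong.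
Qed.

Lemma sim_nil1 P : simL (PPar P PNil) P.
Proof.
  intros a X H. inv H.
  - eexists; split; eauto using lts, pcong.
  - exfalso; eapply no_nil; eauto.
  - exfalso; eapply no_nil; eauto.
  - exfalso; eapply no_nil; eauto.
Qed.

Lemma sim_nil2 P : simL P (PPar P PNil).
Proof. intros a X H. eexists; split; eauto using lts, pcong. Qed.

Lemma sim_resnil1 : simL (PRes PNil) PNil.
Proof. intros a X H. inv H. exfalso; eapply no_nil; eauto. Qed.
Lemma sim_resnil2 : simL PNil (PRes PNil).
Proof. intros a X H. exfalso; eapply no_nil; eauto. Qed.

Lemma swap_unshift a c b : act_unshift a = Some c -> act_unshift c = Some b ->
  exists c', act_unshift (act_rename swap01 a) = Some c' /\ act_unshift c' = Some b.
Proof.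
  destruct a as [[|[|x]]|[|[|x]]|]; simpl; intros H1 H2; inv H1; simpl in H2; inv H2; eauto.
Qed.

Lemma swap_swap P : prename swap01 (prename swap01 P) = P.
Proof.
  rewrite (proj1 rename_comp_all). apply (proj1 rename_id_all). intros [|[|n]]; reflexivity.
Qed.

Ltac unsh := match goal with E1: act_unshift ?a = Some ?c, E2 : act_unshift ?c = Some _ |- _ =>
   destruct (swap_unshift _ _ _ E1 E2) as (c' & F1 & F2) end.

Lemma sim_swap1 P : simL (PRes (PRes P)) (PRes (PRes (prename swap01 P))).
Proof.
  intros b X H. inv H. match goal with Hl : lts (PRes _) _ _ |- _ => inv Hl end.
  unsh.
  eexists; split; [| apply pc_res_swap].
  eapply l_res; [eapply l_res; [apply lts_rename; eassumption| exact F1] | exact F2].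
Qed.

Lemma sim_swap2 P : simL (PRes (PRes (prename swap01 P))) (PRes (PRes P)).
Proof.
  intros b X H. inv H. match goal with Hl : lts (PRes _) _ _ |- _ => inv Hl end.
  unsh.
  match goal with Hl: lts (prename swap01 P) _ _ |- _ =>
    apply lts_rename with (f:=swap01) in Hl; rewrite swap_swap in Hl end.
  eexists; split; [| apply pc_res_swap].
  eapply l_res; [eapply l_res; [eassumption| exact F1] | exact F2].
Qed.

Lemma unshift_S a : act_unshift (act_rename S a) = Some a.
Proof. destruct a; reflexivity. Qed.

Lemma unshift_in a x : act_unshift a = Some (AIn x) -> a = AIn (S x).
Proof. destruct a as [[|y]|[|y]|]; simpl; intro H; inv H; auto. Qed.
Lemma unshift_out a x : act_unshift a = Some (AOut x) -> a = AOut (S x).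
Proof. destruct a as [[|y]|[|y]|]; simpl; intro H; inv H; auto. Qed.
Lemma unshift_tau a : act_unshift a = Some ATau -> a = ATau.
Proof. destruct a as [[|y]|[|y]|]; simpl; intro H; inv H; auto. Qed.

Lemma sim_extr1 P Q : simL (PPar (PRes P) Q) (PRes (PPar P (shift Q))).
Proof.
  intros b X H. inv H.
  - match goal with Hl : lts (PRes P) _ _ |- _ => inv Hl end.
    eexists; split; [eapply l_res; [apply l_par1; eassumption | eassumption] | apply pc_extr].
  - eexists; split; [eapply l_res; [apply l_par2; apply lts_rename; eassumption | apply unshift_S] | apply pc_extr].
  - match goal with Hl : lts (PRes P) _ _ |- _ => inv Hl end.
    match goal with E : act_unshift _ = Some (AIn _) |- _ => apply unshift_in in E; subst end.
    match goal with Hl : lts Q _ _ |- _ => apply lts_rename with (f:=S) in Hl end.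
    eexists; split; [eapply l_res; [eapply l_com1; eassumption | reflexivity] | apply pc_extr].
  - match goal with Hl : lts (PRes P) _ _ |- _ => inv Hl end.
    match goal with E : act_unshift _ = Some (AOut _) |- _ => apply unshift_out in E; subst end.
    match goal with Hl : lts Q _ _ |- _ => apply lts_rename with (f:=S) in Hl end.
    eexists; split; [eapply l_res; [eapply l_com2; eassumption | reflexivity] | apply pc_extr].
Qed.

Lemma sim_extr2 P Q : simL (PRes (PPar P (shift Q))) (PPar (PRes P) Q).
Proof.
  intros b X H. inv H. match goal with Hl : lts (PPar P _) _ _ |- _ => inv Hl end.
  - eexists; split; [apply l_par1; eapply l_res; eassumption | apply pc_sym, pc_extr].
  - match goal with Hl : lts (shift Q) _ _ |- _ =>
      destruct (lts_unrename _ _ _ Hl S Q ltac:(intros; lia) eq_refl) as (a0 & Q0 & HQ & -> & ->) end.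
    match goal with E : act_unshift _ = Some _ |- _ => rewrite unshift_S in E; inv E end.
    eexists; split; [apply l_par2; eassumption | apply pc_sym, pc_extr].
  - match goal with Hl : lts (shift Q) _ _ |- _ =>
      destruct (lts_unrename _ _ _ Hl S Q ltac:(intros; lia) eq_refl) as (a0 & Q0 & HQ & E & ->) end.
    destruct a0; simpl in E; inv E.
    match goal with E : act_unshift _ = Some _ |- _ => simpl in E; inv E end.
    eexists; split; [eapply l_com1; [eapply l_res; [eassumption| reflexivity] | eassumption] | apply pc_sym, pc_extr].
  - match goal with Hl : lts (shift Q) _ _ |- _ =>
      destruct (lts_unrename _ _ _ Hl S Q ltac:(intros; lia) eq_refl) as (a0 & Q0 & HQ & E & ->) end.
    destruct a0; simpl in E; inv E.
    match goal with E : act_unshift _ = Some _ |- _ => simpl in E; inv E end.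
    eexists; split; [eapply l_com2; [eapply l_res; [eassumption| reflexivity] | eassumption] | apply pc_sym, pc_extr].
Qed.

Lemma cong_sim_all :
  (forall P Q, pcong P Q -> simL P Q /\ simL Q P) /\
  (forall M N, scong M N -> simS M N /\ simS N M).
Proof.
  apply cong_mind; intros.
  - split; apply sim_refl.
  - tauto.
  - destruct H as [? ?], H0 as [? ?]; split; eapply sim_trans; eassumption.
  - split; apply sim_sum; tauto.
  - split; apply sim_par; eauto using pcong; tauto.
  - split; apply sim_res; tauto.
  - split; apply sim_comm.
  - split; [apply sim_assoc1 | apply sim_assoc2].
  - split; [apply sim_nil1 | apply sim_nil2].
  - split; [apply sim_resnil1 | apply sim_resnil2].
  - split; [apply sim_swap1 | apply sim_swap2].
  - split; [apply sim_extr1 | apply sim_extr2].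
  - split; apply simS_refl.
  - tauto.
  - destruct H as [? ?], H0 as [? ?]; split; eapply simS_trans; eassumption.
  - split; intros b X H0; inv H0; eexists; split; eauto using slts, pcong.
  - destruct H as [H1 H2]; destruct H0 as [H3 H4].
    split; intros b X H; inv H;
    match goal with Hl : slts _ _ _ |- _ =>
      first [destruct (H1 _ _ Hl) as (Y & ? & ?) | destruct (H2 _ _ Hl) as (Y & ? & ?)
            | destruct (H3 _ _ Hl) as (Y & ? & ?) | destruct (H4 _ _ Hl) as (Y & ? & ?)] end;
    eauto using slts.
  - split; intros b X H; repeat match goal with Hl : slts (SPlus _ _) _ _ |- _ => inv Hl | Hl : slts SNil _ _ |- _ => inv Hl end; eexists; split; eauto 6 using slts, pcong.
  - split; intros b X H; repeat match goal with Hl : slts (SPlus _ _) _ _ |- _ => inv Hl | Hl : slts SNil _ _ |- _ => inv Hl end; eexists; split; eauto 6 using slts, pcong.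
  - split; intros b X H; repeat match goal with Hl : slts (SPlus _ _) _ _ |- _ => inv Hl | Hl : slts SNil _ _ |- _ => inv Hl end; eexists; split; eauto 6 using slts, pcong.
Qed.
Lemma slts_nf M a P : slts M a P -> exists M', scong M (SPlus (SPre a P) M').
Proof.
  induction 1.
  - exists SNil. apply sc_sym, sc_plus_nil.
  - destruct IHslts as (M' & E). exists (SPlus M' N).
    eapply sc_trans; [apply sc_plus; [exact E | apply sc_refl] | apply sc_plus_assoc].
  - destruct IHslts as (M' & E). exists (SPlus M' M).
    eapply sc_trans; [apply sc_plus_comm|].
    eapply sc_trans; [apply sc_plus; [exact E | apply sc_refl] | apply sc_plus_assoc].
Qed.

Lemma par_swap_r A B C : pcong (PPar (PPar A B) C) (PPar (PPar A C) B).
Proof.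
  eapply pc_trans; [apply pc_par_assoc|].
  eapply pc_trans; [apply pc_par; [apply pc_refl | apply pc_par_comm]|].
  apply pc_sym, pc_par_assoc.
Qed.

Lemma unshift_mk a b x : act_unshift a = Some (mk b x) -> a = mk b (S x).
Proof. destruct b; simpl; [apply unshift_in | apply unshift_out]. Qed.

Lemma rename_mk f c x : act_rename f (mk c x) = mk c (f x).
Proof. destruct c; reflexivity. Qed.

Lemma redA P a P' : lts P a P' -> forall b x, a = mk b x ->
  forall N Q', slts N (mk (negb b) x) Q' -> red (PPar P (PSum N)) (PPar P' Q').
Proof.
  induction 1; intros b0 x0 E N0 Q0 HN; subst.
  - destruct (slts_nf _ _ _ H) as (M1 & E1). destruct (slts_nf _ _ _ HN) as (N1 & E2).
    destruct b0; simpl in *.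
    + eapply red_cong; [apply pc_par; apply pc_sum; eassumption | apply red_com | apply pc_refl].
    + eapply red_cong; [eapply pc_trans; [apply pc_par_comm | apply pc_par; apply pc_sum; eassumption]
                       | apply red_com | apply pc_par_comm].
  - eapply red_cong; [apply par_swap_r | apply red_par; eapply IHlts; eauto | apply par_swap_r].
  - eapply red_cong; [eapply pc_trans; [apply pc_par; [apply pc_par_comm | apply pc_refl] | apply par_swap_r]
                     | apply red_par; eapply IHlts; eauto |].
    eapply pc_trans; [apply par_swap_r | apply pc_par; [apply pc_par_comm | apply pc_refl]].
  - destruct b0; discriminate.
  - destruct b0; discriminate.
  - apply unshift_mk in H0; subst.
    eapply red_cong; [apply pc_extr | apply red_res | apply pc_sym, pc_extr].
    apply (IHlts b0 (S x0) eq_refl (srename S N0) (shift Q0)).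
    rewrite <- (rename_mk S). apply slts_rename; auto.
Qed.

Lemma redB Q a Q' : lts Q a Q' -> forall c x, a = mk c x ->
  forall P P', lts P (mk (negb c) x) P' -> red (PPar P Q) (PPar P' Q').
Proof.
  induction 1; intros c x0 E P0 P0' HP; subst.
  - eapply redA; eauto. rewrite Bool.negb_involutive. auto.
  - eapply red_cong; [apply pc_sym, pc_par_assoc | apply red_par; eapply IHlts; eauto | apply pc_par_assoc].
  - eapply red_cong; [eapply pc_trans; [apply pc_sym, pc_par_assoc | apply par_swap_r]
                     | apply red_par; eapply IHlts; eauto |].
    eapply pc_trans; [apply par_swap_r | apply pc_par_assoc].
  - destruct c; discriminate.
  - destruct c; discriminate.
  - apply unshift_mk in H0; subst.
    apply lts_rename with (f := S) in HP. rewrite rename_mk in HP.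
    specialize (IHlts c (S x0) eq_refl _ _ HP).
    eapply red_cong; [| apply red_res; exact IHlts |].
    + eapply pc_trans; [apply pc_par_comm|].
      eapply pc_trans; [apply pc_extr|]. apply pc_res, pc_par_comm.
    + eapply pc_trans; [apply pc_res, pc_par_comm|].
      eapply pc_trans; [apply pc_sym, pc_extr|]. apply pc_par_comm.
Qed.

Lemma tau_red P a P' : lts P a P' -> a = ATau -> red P P'.
Proof.
  induction 1; intro E; subst.
  - destruct (slts_nf _ _ _ H) as (M1 & E1).
    eapply red_cong; [apply pc_sum; eassumption | apply red_tau | apply pc_refl].
  - apply red_par; auto.
  - eapply red_cong; [apply pc_par_comm | apply red_par; auto | apply pc_par_comm].
  - eapply (redB Q (AOut x) Q' H0 false x eq_refl); eauto.
  - eapply (redB Q (AIn x) Q' H0 true x eq_refl); eauto.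
  - apply unshift_tau in H0; subst. apply red_res; auto.
Qed.

Lemma red_lts P Q : red P Q -> exists Q', lts P ATau Q' /\ pcong Q' Q.
Proof.
  induction 1.
  - eexists; split; [eapply l_com1; apply l_sum; apply sl_l; apply sl_pre | apply pc_refl].
  - eexists; split; [apply l_sum; apply sl_l; apply sl_pre | apply pc_refl].
  - destruct IHred as (X & ? & ?). exists (PRes X); split; [eapply l_res; [eauto | reflexivity] | apply pc_res; auto].
  - destruct IHred as (X & ? & ?). exists (PPar X Q); split; [apply l_par1; auto | apply pc_par; eauto using pcong].
  - destruct IHred as (X & H2 & H3).
    destruct ((proj2 ((proj1 cong_sim_all) _ _ H)) _ _ H2) as (Y & H4 & H5).
    exists Y; split; auto. eapply pc_trans; [apply pc_sym; exact H5|]. eapply pc_trans; [exact H3 | exact H1].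
Qed.
Lemma resn_S n X : resn (S n) X = PRes (resn n X).
Proof. reflexivity. Qed.

Lemma resn_cong n X Y : pcong X Y -> pcong (resn n X) (resn n Y).
Proof. intro H; induction n; simpl; [exact H | apply pc_res; exact IHn]. Qed.

Lemma pure_resn n X : ppure (resn n X) <-> ppure X.
Proof. induction n; simpl; tauto. Qed.

Lemma iter_shift_succ n T : Nat.iter n shift (shift T) = shift (Nat.iter n shift T).
Proof. induction n; simpl; congruence. Qed.

Lemma psubst_resn n : forall T X, psubst T (resn n X) = resn n (psubst (Nat.iter n shift T) X).
Proof.
  induction n; intros T X; simpl; auto.
  rewrite IHn. rewrite iter_shift_succ. reflexivity.
Qed.

Lemma extr_resn n : forall X T, pcong (PPar (resn n X) T) (resn n (PPar X (Nat.iter n shift T))).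
Proof.
  induction n; intros X T; simpl; [apply pc_refl|].
  eapply pc_trans; [apply pc_extr|]. apply pc_res.
  rewrite <- iter_shift_succ. apply IHn.
Qed.

Lemma pure_iter_shift n T : ppure T -> ppure (Nat.iter n shift T).
Proof.
  intro H; induction n; simpl; auto. unfold shift. apply (proj1 pure_rename_all). auto.
Qed.

Lemma iter_shift_nil n : Nat.iter n shift PNil = PNil.
Proof. induction n; simpl; auto. rewrite IHn. reflexivity. Qed.

Lemma psubst_pure_all :
  (forall P T, ppure P -> psubst T P = P) /\ (forall M T, spure M -> ssubst T M = M).
Proof.
  apply proc_sum_mind; intros; simpl in *; try tauto; f_equal; try tauto; firstorder.
Qed.

Lemma red_pure P Q : red P Q -> ppure P -> ppure Q.
Proof.
  induction 1; simpl; try tauto.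
  intro HP. apply (proj1 cong_pure_all _ _ H1). apply IHred. apply (proj1 cong_pure_all _ _ H). auto.
Qed.

Definition nfp n b x Q M R := resn n (PPar (PSum (SPlus (SPre (mk b (x + n)) Q) M)) R).

Lemma lts_nf P a P' : lts P a P' -> forall b x, a = mk b x ->
  exists n Q M R, pcong P (nfp n b x Q M R) /\ pcong P' (resn n (PPar Q R)).
Proof.
  unfold nfp. induction 1; intros b0 x0 E; subst.
  - destruct (slts_nf _ _ _ H) as (M1 & E1).
    exists 0, P, M1, PNil. simpl. rewrite Nat.add_0_r. split.
    + eapply pc_trans; [apply pc_sum; exact E1 | apply pc_sym, pc_par_nil].
    + apply pc_sym, pc_par_nil.
  - destruct (IHlts b0 x0 eq_refl) as (n & Q0 & M0 & R0 & E1 & E2).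
    exists n, Q0, M0, (PPar R0 (Nat.iter n shift Q)). split.
    + eapply pc_trans; [apply pc_par; [exact E1 | apply pc_refl]|].
      eapply pc_trans; [apply extr_resn|]. apply resn_cong, pc_par_assoc.
    + eapply pc_trans; [apply pc_par; [exact E2 | apply pc_refl]|].
      eapply pc_trans; [apply extr_resn|]. apply resn_cong, pc_par_assoc.
  - destruct (IHlts b0 x0 eq_refl) as (n & Q0 & M0 & R0 & E1 & E2).
    exists n, Q0, M0, (PPar R0 (Nat.iter n shift P)). split.
    + eapply pc_trans; [apply pc_par_comm|].
      eapply pc_trans; [apply pc_par; [exact E1 | apply pc_refl]|].
      eapply pc_trans; [apply extr_resn|]. apply resn_cong, pc_par_assoc.
    + eapply pc_trans; [apply pc_par_comm|].
      eapply pc_trans; [apply pc_par; [exact E2 | apply pc_refl]|].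
      eapply pc_trans; [apply extr_resn|]. apply resn_cong, pc_par_assoc.
  - destruct b0; discriminate.
  - destruct b0; discriminate.
  - apply unshift_mk in H0; subst.
    destruct (IHlts b0 (S x0) eq_refl) as (n & Q0 & M0 & R0 & E1 & E2).
    exists (S n), Q0, M0, R0. simpl. replace (x0 + S n) with (S x0 + n) by lia.
    split; apply pc_res; assumption.
Qed.

Lemma nf_lts n : forall b x Q M R, lts (nfp n b x Q M R) (mk b x) (resn n (PPar Q R)).
Proof.
  unfold nfp. induction n; intros b x Q M R; simpl.
  - rewrite Nat.add_0_r. apply l_par1, l_sum, sl_l, sl_pre.
  - eapply l_res; [| instantiate (1 := mk b (S x)); destruct b; reflexivity].
    replace (x + S n) with (S x + n) by lia. apply IHn.
Qed.
Lemma bis_is : strong_bisimulation ccs_bisim.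
Proof.
  split.
  - intros P Q (R & [Hs Hst] & H). exists R; split; [split; auto | auto].
  - intros P Q a P' (R & [Hs Hst] & H) HP.
    destruct (Hst _ _ _ _ H HP) as (Q' & HQ & HR). exists Q'; split; auto.
    exists R; split; [split; auto | auto].
Qed.

Lemma bis_sym P Q : ccs_bisim P Q -> ccs_bisim Q P.
Proof. apply (proj1 bis_is). Qed.

Lemma cong_bis P Q : pcong P Q -> ccs_bisim P Q.
Proof.
  intro H. exists pcong; split; auto. split.
  - intros; apply pc_sym; auto.
  - intros A B a A' E HA. exact (proj1 (proj1 cong_sim_all _ _ E) _ _ HA).
Qed.

Lemma bis_trans P Q R : ccs_bisim P Q -> ccs_bisim Q R -> ccs_bisim P R.
Proof.
  intros H1 H2. exists (fun x z => exists y, ccs_bisim x y /\ ccs_bisim y z).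
  split; [split|eauto].
  - intros x z (y & A & B). exists y; split; apply bis_sym; auto.
  - intros x z a x' (y & A & B) Hx.
    destruct ((proj2 bis_is) _ _ _ _ A Hx) as (y' & Hy & A').
    destruct ((proj2 bis_is) _ _ _ _ B Hy) as (z' & Hz & B').
    exists z'; split; eauto.
Qed.

Lemma bis_par P Q T : ccs_bisim P Q -> ccs_bisim (PPar P T) (PPar Q T).
Proof.
  intro H. exists (fun X Y => exists A B T, X = PPar A T /\ Y = PPar B T /\ ccs_bisim A B).
  split; [split | eauto 7].
  - intros X Y (A & B & T0 & -> & -> & HB). exists B, A, T0; auto using bis_sym.
  - intros X Y a X' (A & B & T0 & -> & -> & HB) HX. inv HX.
    + destruct ((proj2 bis_is) _ _ _ _ HB ltac:(eassumption)) as (B' & ? & ?).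
      exists (PPar B' T0); split; [apply l_par1; auto | eauto 7].
    + exists (PPar B Q'); split; [apply l_par2; auto | eauto 7].
    + destruct ((proj2 bis_is) _ _ _ _ HB ltac:(eassumption)) as (B' & ? & ?).
      exists (PPar B' Q'); split; [eapply l_com1; eauto | eauto 7].
    + destruct ((proj2 bis_is) _ _ _ _ HB ltac:(eassumption)) as (B' & ? & ?).
      exists (PPar B' Q'); split; [eapply l_com2; eauto | eauto 7].
Qed.

Lemma cstep_inv P Ce Qe : cstep P Ce Qe ->
  (Ce = CHole /\ red P Qe) \/
  exists b n a Q M R, Ce = CPre (mk (negb b) a) X1 /\ pcong P (nfp n b a Q M R) /\
                      Qe = resn n (PPar (PPar Q R) X1).
Proof.
  destruct 1.
  - left; auto.
  - right. exists true, n, a, Q, M, R. auto.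
  - right. exists false, n, a, Q, M, R. auto.
Qed.

Lemma cstep_mk P n b a Q M R : pcong P (nfp n b a Q M R) ->
  cstep P (CPre (mk (negb b) a) X1) (resn n (PPar (PPar Q R) X1)).
Proof. destruct b; intro H; [apply cs_rcv with (M := M) | apply cs_snd with (M := M)]; exact H. Qed.

Lemma nfp_pure n b a Q M R : ppure (nfp n b a Q M R) -> ppure Q /\ ppure R.
Proof. unfold nfp. rewrite pure_resn. simpl. tauto. Qed.

Lemma psubst_nf n Q R T : ppure Q -> ppure R ->
  psubst T (resn n (PPar (PPar Q R) X1)) = resn n (PPar (PPar Q R) (Nat.iter n shift T)).
Proof.
  intros HQ HR. rewrite psubst_resn. simpl.
  rewrite (proj1 psubst_pure_all Q), (proj1 psubst_pure_all R); auto.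
Qed.

Lemma cong_pure P Q : pcong P Q -> ppure P -> ppure Q.
Proof. intros H; apply (proj1 cong_pure_all _ _ H). Qed.

Lemma pure_nil : ppure PNil.
Proof. exact I. Qed.
Lemma bis_to_L : L_bisimulation L_CCS (fun A B => ppure A /\ ppure B /\ ccs_bisim A B).
Proof.
  split; [intros A B (? & ? & ?); auto | split].
  - intros A B (? & ? & ?); auto using bis_sym.
  - intros A B C A' (pA & pB & bAB) HC. split.
    2: { intro nL; exfalso; apply nL; exists A, A'; exact HC. }
    intros _.
    destruct HC as (_ & Ce & Qe & T & Hc & pT & Ecg & Ec).
    destruct (cstep_inv _ _ _ Hc) as [[-> Hr] | (b & n & a & Q0 & M0 & R0 & -> & Ecg' & ->)].
    + subst C. simpl.
      assert (pQe : ppure Qe) by (eapply red_pure; eauto).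
      rewrite (proj1 psubst_pure_all _ _ pQe) in Ecg.
      destruct (red_lts _ _ Hr) as (A1 & HA1 & EA1).
      destruct ((proj2 bis_is) _ _ _ _ bAB HA1) as (B1 & HB1 & bB).
      assert (HrB : red B B1) by (eapply tau_red; eauto).
      assert (pB1 : ppure B1) by (eapply red_pure; eauto).
      exists B1. split.
      * split; auto. exists CHole, B1, PNil. split; [apply cs_tau; auto|].
        split; [exact pure_nil|]. split; [|reflexivity].
        rewrite (proj1 psubst_pure_all _ _ pB1). apply pc_refl.
      * split; [eapply cong_pure; eauto|]. split; auto.
        eapply bis_trans; [apply cong_bis; apply pc_sym; exact Ecg|].
        eapply bis_trans; [apply cong_bis; apply pc_sym; exact EA1|]. exact bB.
    + subst C. simpl.
      destruct (nfp_pure _ _ _ _ _ _ (cong_pure _ _ Ecg' pA)) as [pQ0 pR0].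
      rewrite psubst_nf in Ecg by auto.
      destruct ((proj2 ((proj1 cong_sim_all) _ _ Ecg')) _ _ (nf_lts n b a Q0 M0 R0)) as (A1 & HA1 & EA1).
      destruct ((proj2 bis_is) _ _ _ _ bAB HA1) as (B1 & HB1 & bB).
      destruct (lts_nf _ _ _ HB1 b a eq_refl) as (m & Q2 & M2 & R2 & EB & EB1).
      destruct (nfp_pure _ _ _ _ _ _ (cong_pure _ _ EB pB)) as [pQ2 pR2].
      exists (resn m (PPar (PPar Q2 R2) (Nat.iter m shift T))). split.
      * split; auto. exists (CPre (mk (negb b) a) X1), (resn m (PPar (PPar Q2 R2) X1)), T.
        split; [eapply cstep_mk; exact EB|]. split; auto. split; [|reflexivity].
        rewrite psubst_nf by auto. apply pc_refl.
      * split; [eapply cong_pure; [exact Ecg|]; apply pure_resn; simpl; auto using pure_iter_shift|].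
        split; [apply pure_resn; simpl; auto using pure_iter_shift|].
        eapply bis_trans; [apply cong_bis; apply pc_sym; exact Ecg|].
        eapply bis_trans; [apply cong_bis; apply pc_sym; apply extr_resn|].
        eapply bis_trans; [apply cong_bis; apply pc_par; [exact EA1 | apply pc_refl]|].
        eapply bis_trans; [apply bis_par; exact bB|].
        eapply bis_trans; [apply cong_bis; apply pc_par; [exact EB1 | apply pc_refl]|].
        apply cong_bis, extr_resn.
Qed.

Lemma L_to_bis RL : L_bisimulation L_CCS RL ->
  strong_bisimulation (fun A B => exists P0 Q0, pcong A P0 /\ RL P0 Q0 /\ pcong Q0 B).
Proof.
  intros (Hp & Hs & Hst). split.
  - intros A B (P0 & Q0 & E1 & HR & E2). exists Q0, P0; split; [apply pc_sym; auto|].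
    split; [apply Hs; auto | apply pc_sym; auto].
  - intros A B a A' (P0 & Q0 & E1 & HR & E2) HA.
    destruct (Hp _ _ HR) as [pP0 pQ0].
    destruct ((proj1 ((proj1 cong_sim_all) _ _ E1)) _ _ HA) as (P1 & HP1 & EP1).
    assert (Vis : forall b x, a = mk b x ->
      exists B', lts B a B' /\ exists P2 Q2, pcong A' P2 /\ RL P2 Q2 /\ pcong Q2 B').
    { intros b x ->.
      destruct (lts_nf _ _ _ HP1 b x eq_refl) as (n & Q1 & M1 & R1 & EP & EP1').
      destruct (nfp_pure _ _ _ _ _ _ (cong_pure _ _ EP pP0)) as [pQ1 pR1].
      assert (HC : cstepI P0 (CPre (mk (negb b) x) PNil) (resn n (PPar (PPar Q1 R1) PNil))).
      { split; auto. exists (CPre (mk (negb b) x) X1), (resn n (PPar (PPar Q1 R1) X1)), PNil.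
        split; [eapply cstep_mk; exact EP|]. split; [exact pure_nil|]. split; [|reflexivity].
        rewrite psubst_nf by auto. rewrite iter_shift_nil. apply pc_refl. }
      destruct (proj1 (Hst _ _ _ _ HR HC) ltac:(eexists; eexists; exact HC)) as (Q' & HQ' & HR').
      destruct HQ' as (_ & Ce & Qe & T & Hc & pT & Ecg & Ec).
      destruct (cstep_inv _ _ _ Hc) as [[-> Hr] | (b' & m & x' & Q2 & M2 & R2 & -> & EQ & ->)].
      - simpl in Ec. discriminate.
      - simpl in Ec. inversion Ec as [[Emk ET]]. subst T.
        assert (b' = b /\ x' = x) as [-> ->] by (destruct b, b'; simpl in Emk; inversion Emk; auto).
        destruct (nfp_pure _ _ _ _ _ _ (cong_pure _ _ EQ pQ0)) as [pQ2 pR2].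
        rewrite psubst_nf in Ecg by auto. rewrite iter_shift_nil in Ecg.
        destruct ((proj2 ((proj1 cong_sim_all) _ _ EQ)) _ _ (nf_lts m b x Q2 M2 R2)) as (Q3 & HQ3 & EQ3).
        destruct ((proj1 ((proj1 cong_sim_all) _ _ E2)) _ _ HQ3) as (B1 & HB1 & EB1).
        exists B1; split; auto.
        exists (resn n (PPar (PPar Q1 R1) PNil)), Q'. split; [|split; auto].
        + eapply pc_trans; [exact EP1|]. eapply pc_trans; [exact EP1'|].
          apply resn_cong, pc_sym, pc_par_nil.
        + eapply pc_trans; [apply pc_sym; exact Ecg|].
          eapply pc_trans; [apply resn_cong, pc_par_nil|].
          eapply pc_trans; [exact EQ3|]. exact EB1. }
    destruct a as [x|x|].
    + exact (Vis true x eq_refl).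
    + exact (Vis false x eq_refl).
    + assert (Hr : red P0 P1) by (eapply tau_red; eauto).
      assert (pP1 : ppure P1) by (eapply red_pure; eauto).
      assert (HC : cstepI P0 CHole P1).
      { split; auto. exists CHole, P1, PNil. split; [apply cs_tau; auto|].
        split; [exact pure_nil|]. split; [|reflexivity].
        rewrite (proj1 psubst_pure_all _ _ pP1). apply pc_refl. }
      destruct (proj1 (Hst _ _ _ _ HR HC) ltac:(eexists; eexists; exact HC)) as (Q' & HQ' & HR').
      destruct HQ' as (_ & Ce & Qe & T & Hc & pT & Ecg & Ec).
      destruct (cstep_inv _ _ _ Hc) as [[-> Hr'] | (b' & m & x' & Q2 & M2 & R2 & -> & EQ & ->)].
      * assert (pQe : ppure Qe) by (eapply red_pure; eauto).
        rewrite (proj1 psubst_pure_all _ _ pQe) in Ecg.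
        destruct (red_lts _ _ Hr') as (Q2 & HQ2 & EQ2).
        destruct ((proj1 ((proj1 cong_sim_all) _ _ E2)) _ _ HQ2) as (B1 & HB1 & EB1).
        exists B1; split; auto. exists P1, Q'. split; [exact EP1|]. split; auto.
        eapply pc_trans; [apply pc_sym; exact Ecg|].
        eapply pc_trans; [apply pc_sym; exact EQ2|]. exact EB1.
      * simpl in Ec. discriminate.
Qed.

Theorem mainTheorem8 (P Q : proc) :
  ppure P -> ppure Q -> (L_bisim L_CCS P Q <-> ccs_bisim P Q).
Proof.
  intros pP pQ. split.
  - intros (RL & HRL & HPQ).
    exists (fun A B => exists P0 Q0, pcong A P0 /\ RL P0 Q0 /\ pcong Q0 B).
    split; [apply L_to_bis; auto|]. exists P, Q; split; [apply pc_refl|]. split; auto. apply pc_refl.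
  - intro HB. exists (fun A B => ppure A /\ ppure B /\ ccs_bisim A B).
    split; [apply bis_to_L | auto].
Qed.
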